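(* Let $x,y>0$ with $x\ne y$, and define for $t\in(-\min\{x,y\},\infty)$ \[ G_{x,y}(t)=G(x+t,y+t)=\sqrt{(x+t)(y+t)}\,. \] Then $G_{x,y}(t)$ is a Bernstein function of $t$ on $(-\min\{x,y\},\infty)$.
   Context: For positive numbers $a,b$, the geometric mean is $G(a,b)=\sqrt{ab}$. A function $f$ on an interval $I\subseteq\mathbb{R}$ is completely monotonic on $I$ if it has derivatives of all orders on $I$ and $(-1)^n f^{(n)}(t)\ge 0$ for all $t\in I$ and all integers $n\ge0$. A function $f:I\to[0,\infty)$ is a Bernstein function on $I$ if it has derivatives of all orders and $f'$ is completely monotonic on $I$. *)

(* Defs.v *)
From Stdlib Require Import Reals.
From Coquelicot Require Import Coquelicot.
Open Scope R_scope.

Definition smooth_on (I : R -> Prop) (f : R -> R) : Prop :=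
  forall (n : nat) (t : R), I t -> ex_derive_n f n t.

Definition completely_monotonic (I : R -> Prop) (f : R -> R) : Prop :=
  smooth_on I f /\
  forall (n : nat) (t : R), I t -> 0 <= (-1) ^ n * Derive_n f n t.

Definition bernstein (I : R -> Prop) (f : R -> R) : Prop :=
  (forall t, I t -> 0 <= f t) /\ smooth_on I f /\
  completely_monotonic I (Derive f).

(* Main.v *)
Require Import Defs.
From Stdlib Require Import Reals Lra Lia FunctionalExtensionality.
From Coquelicot Require Import Coquelicot.
Open Scope R_scope.

Definition J (x y : R) (u : R) : Prop := - Rmin x y < u.
Definition ee (x y a b : R) (u : R) : R := exp (-(a * ln (x+u)) - b * ln (y+u)).
Definition De (x y a b : R) (u : R) : R :=
  - (a * ee x (y) (a+1) b u + b * ee x y a (b+1) u).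

Lemma J_pos x y u : J x y u -> 0 < x + u /\ 0 < y + u.
Proof. unfold J; intros H. generalize (Rmin_l x y) (Rmin_r x y); lra. Qed.

Lemma J_loc x y u : J x y u -> locally u (J x y).
Proof. intros H. exact (open_gt (- Rmin x y) u H). Qed.

Lemma ee_a1 x y a b u : J x y u -> ee x y (a+1) b u = ee x y a b u * / (x+u).
Proof.
  intros H; destruct (J_pos _ _ _ H) as [H1 H2]. unfold ee.
  replace (- ((a + 1) * ln (x + u)) - b * ln (y + u)) with
    ((- (a * ln (x + u)) - b * ln (y + u)) + - ln (x+u)) by ring.
  rewrite exp_plus, exp_Ropp, exp_ln; auto.
Qed.

Lemma ee_b1 x y a b u : J x y u -> ee x y a (b+1) u = ee x y a b u * / (y+u).
Proof.
  intros H; destruct (J_pos _ _ _ H) as [H1 H2]. unfold ee.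
  replace (- (a * ln (x + u)) - (b+1) * ln (y + u)) with
    ((- (a * ln (x + u)) - b * ln (y + u)) + - ln (y+u)) by ring.
  rewrite exp_plus, exp_Ropp, exp_ln; auto.
Qed.

Lemma ee_derive x y a b u : J x y u -> is_derive (ee x y a b) u (De x y a b u).
Proof.
  intros H; destruct (J_pos _ _ _ H) as [H1 H2].
  unfold De; rewrite ee_a1, ee_b1 by auto.
  unfold ee. auto_derive. { split; [lra | split; [lra | auto]]. }
  unfold Rminus; ring.
Qed.

Lemma Derive_ee x y a b : forall u, J x y u -> Derive (ee x y a b) u = De x y a b u.
Proof. intros u H. apply is_derive_unique, ee_derive, H. Qed.

Lemma Derive_n_S f n t : Derive_n f (S n) t = Derive_n (Derive f) n t.
Proof. replace (S n) with (n+1)%nat by lia. rewrite <- Derive_n_comp. reflexivity. Qed.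

Lemma ex_derive_n_SS f n t : ex_derive_n f (S (S n)) t <-> ex_derive_n (Derive f) (S n) t.
Proof.
  simpl. replace (Derive (Derive_n f n)) with (Derive_n (Derive f) n). tauto.
  apply functional_extensionality; intro z. rewrite <- Derive_n_S. reflexivity.
Qed.

Lemma ee_smooth_aux x y n : forall k, (k <= n)%nat -> forall a b t, J x y t -> ex_derive_n (ee x y a b) k t.
Proof.
  induction n as [|n IH]; intros k Hk a b t Ht.
  - inversion Hk; simpl; auto.
  - inversion Hk as [|? Hk']; [|apply IH; auto]. subst k.
    destruct n as [|m].
    + simpl. eexists. apply ee_derive; auto.
    + apply ex_derive_n_SS.
      apply ex_derive_n_ext_loc with (f := De x y a b).
      { apply filter_imp with (2 := J_loc _ _ _ Ht). intros z Hz. symmetry. apply Derive_ee; auto. }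
      unfold De. apply ex_derive_n_opp. apply ex_derive_n_plus.
      * apply filter_imp with (2 := J_loc _ _ _ Ht). intros z Hz k Hk2.
        apply ex_derive_n_scal_l. apply IH; auto.
      * apply filter_imp with (2 := J_loc _ _ _ Ht). intros z Hz k Hk2.
        apply ex_derive_n_scal_l. apply IH; auto.
Qed.

Lemma ee_smooth x y n a b t : J x y t -> ex_derive_n (ee x y a b) n t.
Proof. intros; eapply ee_smooth_aux; eauto. Qed.

Lemma loc_smooth x y a b t : J x y t ->
  locally t (fun z => forall k, (k <= 0)%nat \/ True -> ex_derive_n (ee x y a b) k z).
Proof.
  intros Ht. apply filter_imp with (2 := J_loc _ _ _ Ht). intros z Hz k _. apply ee_smooth; auto.
Qed.

Lemma De_Derive_n x y a b n t : J x y t ->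
  Derive_n (De x y a b) n t = - (a * Derive_n (ee x y (a+1) b) n t + b * Derive_n (ee x y a (b+1)) n t).
Proof.
  intros Ht. unfold De. rewrite Derive_n_opp, Derive_n_plus.
  - rewrite !Derive_n_scal_l. reflexivity.
  - apply filter_imp with (2 := J_loc _ _ _ Ht). intros z Hz k _.
    apply ex_derive_n_scal_l, ee_smooth; auto.
  - apply filter_imp with (2 := J_loc _ _ _ Ht). intros z Hz k _.
    apply ex_derive_n_scal_l, ee_smooth; auto.
Qed.

Lemma ee_Derive_n x y a b n t : J x y t ->
  Derive_n (ee x y a b) (S n) t = Derive_n (De x y a b) n t.
Proof.
  intros Ht. rewrite Derive_n_S. apply Derive_n_ext_loc.
  apply filter_imp with (2 := J_loc _ _ _ Ht). intros z Hz. apply Derive_ee; auto.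
Qed.

Lemma ee_sign x y n : forall a b t, 0 <= a -> 0 <= b -> J x y t ->
  0 <= (-1) ^ n * Derive_n (ee x y a b) n t.
Proof.
  induction n as [|n IH]; intros a b t Ha Hb Ht.
  - simpl. unfold ee. generalize (exp_pos (- (a * ln (x + t)) - b * ln (y + t))). lra.
  - rewrite ee_Derive_n, De_Derive_n by auto.
    pose proof (IH (a+1) b t ltac:(lra) Hb Ht) as I1.
    pose proof (IH a (b+1) t Ha ltac:(lra) Ht) as I2.
    simpl. nra.
Qed.

Lemma F_ee x y u : J x y u -> sqrt ((x+u)*(y+u)) = ee x y (-(1/2)) (-(1/2)) u.
Proof.
  intros H; destruct (J_pos _ _ _ H) as [H1 H2]. unfold ee.
  replace (- (- (1 / 2) * ln (x + u)) - - (1 / 2) * ln (y + u)) with (ln ((x+u)*(y+u)) / 2)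
    by (rewrite ln_mult by lra; field).
  set (w := exp (ln ((x + u) * (y + u)) / 2)).
  assert (Hw : 0 < w) by apply exp_pos.
  assert (Hw2 : w * w = (x+u)*(y+u)).
  { unfold w. rewrite <- exp_plus. replace (ln ((x + u) * (y + u)) / 2 + ln ((x + u) * (y + u)) / 2)
      with (ln ((x + u) * (y + u))) by field. apply exp_ln. nra. }
  rewrite <- Hw2. apply sqrt_square. lra.
Qed.

Lemma De_smooth x y a b n t : J x y t -> ex_derive_n (De x y a b) n t.
Proof.
  intros Ht. unfold De. apply ex_derive_n_opp. apply ex_derive_n_plus.
  - apply filter_imp with (2 := J_loc _ _ _ Ht). intros z Hz k _.
    apply ex_derive_n_scal_l, ee_smooth; auto.
  - apply filter_imp with (2 := J_loc _ _ _ Ht). intros z Hz k _.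
    apply ex_derive_n_scal_l, ee_smooth; auto.
Qed.

Theorem theorem4p1 (x y : R) (hx : 0 < x) (hy : 0 < y) (hxy : x <> y) :
  bernstein (fun t => - Rmin x y < t) (fun t => sqrt ((x + t) * (y + t))).
Proof.
  set (F := fun t => sqrt ((x + t) * (y + t))).
  change (fun t => - Rmin x y < t) with (J x y).
  assert (HF : forall u, J x y u -> locally u (fun z => ee x y (-(1/2)) (-(1/2)) z = F z)).
  { intros u Hu. apply filter_imp with (2 := J_loc _ _ _ Hu). intros z Hz.
    unfold F. symmetry. apply F_ee; auto. }
  assert (HDF : forall u, J x y u -> Derive F u = De x y (-(1/2)) (-(1/2)) u).
  { intros u Hu. rewrite <- Derive_ee by auto. symmetry. apply Derive_ext_loc. apply HF; auto. }
  assert (HDFl : forall u, J x y u -> locally u (fun z => De x y (-(1/2)) (-(1/2)) z = Derive F z)).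
  { intros u Hu. apply filter_imp with (2 := J_loc _ _ _ Hu). intros z Hz. symmetry; auto. }
  set (d2 := (x - y)^2 / 4).
  assert (HDDF : forall u, J x y u -> Derive (Derive F) u = (- d2) * ee x y (3/2) (3/2) u).
  { intros u Hu. destruct (J_pos _ _ _ Hu) as [H1 H2].
    rewrite <- (Derive_ext_loc _ _ _ (HDFl u Hu)).
    change (Derive (De x y (-(1/2)) (-(1/2))) u) with (Derive_n (De x y (-(1/2)) (-(1/2))) 1 u).
    rewrite De_Derive_n by auto. simpl.
    rewrite !Derive_ee by auto. unfold De.
    replace (3/2) with (-(1/2)+1+1) by field.
    repeat rewrite ee_a1 by auto. repeat rewrite ee_b1 by auto.
    unfold d2. field. lra. }
  split; [|split].
  - intros t _. apply sqrt_pos.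
  - intros n t Ht. apply ex_derive_n_ext_loc with (1 := HF t Ht). apply ee_smooth; auto.
  - split.
    + intros n t Ht. apply ex_derive_n_ext_loc with (1 := HDFl t Ht). apply De_smooth; auto.
    + intros n t Ht. destruct n as [|k].
      * simpl. rewrite HDF by auto. unfold De.
        generalize (exp_pos (- ((-(1/2)+1) * ln (x + t)) - (-(1/2)) * ln (y + t)))
                   (exp_pos (- ((-(1/2)) * ln (x + t)) - (-(1/2)+1) * ln (y + t))).
        unfold ee. lra.
      * rewrite Derive_n_S.
        rewrite (Derive_n_ext_loc _ (fun u => (- d2) * ee x y (3/2) (3/2) u)).
        2: { apply filter_imp with (2 := J_loc _ _ _ Ht). intros z Hz. auto. }
        rewrite Derive_n_scal_l.
        pose proof (ee_sign x y k (3/2) (3/2) t ltac:(lra) ltac:(lra) Ht).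
        assert (0 <= d2) by (unfold d2; nra).
        simpl. nra.
Qed.
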